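(* For every integer $n\ge 2$, the dihedral Artin group $DA_n=\langle a,b\mid [aba\cdots]_n=[bab\cdots]_n\rangle$ is Cayley systolic.
   Context: $[xyx\cdots]_k$ denotes the alternating word $xyx\cdots$ of length $k$. A group is Cayley systolic if it admits a systolic presentation, i.e. a presentation $\langle S\mid R\rangle$ with $S$ a finite generating set such that: $S\cap S^{-1}=\emptyset$; $R=\{a\cdot b\cdot c^{-1}\mid a,b,c\in S,\ abc^{-1}=e\}$ presents the group; there are no $a,b,c\in S$ with $abc=e$; $abc\in S\Rightarrow ab,bc\in S$; and $S$ satisfies: (1) if $ua=wb\in S$, $ud=wc\in S$, $u\neq w$, $a\neq d$ ($u,w,a,b,c,d\in S$), then $\exists k\in S$: $w=uk$ or $ua=udk$; (2) if $bv=cx\in S$, $av=dx\in S$, $v\neq x$, $a\neq b$, then $\exists k\in S$: $v=kx$ or $av=kbv$; (3) if $ux,uv\in S$, $vb=xc\in S$, $v\neq x$, then $\exists k\in S$: $k=uvb$ or $v=xk$; (4) if $vw,xw\in S$, $dx=av\in S$, $v\neq x$, then $\exists k\in S$: $k=avw$ or $x=kv$; (5) if $wv,wx,uv,ux\in S$, $v\neq x$, $u\neq w$, then $\exists k\in S$: $w=ku$ or $x=vk$. *)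

(* Defs.v *)
From Stdlib Require Import List.
Import ListNotations.

Record Group := {
  gcar :> Type;
  gmul : gcar -> gcar -> gcar;
  ginv : gcar -> gcar;
  gone : gcar;
  gmulA : forall x y z, gmul x (gmul y z) = gmul (gmul x y) z;
  gmul1l : forall x, gmul gone x = x;
  gmulVl : forall x, gmul (ginv x) x = gone }.

Arguments gmul {g}.
Arguments ginv {g}.
Arguments gone {g}.

(* Words over an alphabet X: letters x^{+1} (false) or x^{-1} (true). *)
Definition word (X : Type) := list (X * bool).

Fixpoint eval_word {G : Group} {X : Type} (f : X -> G) (w : word X) : G :=
  match w with
  | [] => gone
  | (x, inv) :: w' => gmul (if inv then ginv (f x) else f x) (eval_word f w')
  end.

Definition is_hom (G H : Group) (phi : G -> H) : Prop :=
  forall x y : G, phi (gmul x y) = gmul (phi x) (phi y).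

Definition presents (G : Group) (X : Type) (iota : X -> G)
  (R : word X -> word X -> Prop) : Prop :=
  (forall g : G, exists w : word X, eval_word iota w = g) /\
  (forall u v, R u v -> eval_word iota u = eval_word iota v) /\
  (forall (H : Group) (f : X -> H),
     (forall u v, R u v -> eval_word f u = eval_word f v) ->
     exists phi : G -> H, is_hom G H phi /\ forall x, phi (iota x) = f x).

Fixpoint alt {X : Type} (x y : X) (k : nat) : word X :=
  match k with
  | 0 => []
  | S k' => (x, false) :: alt y x k'
  end.

(* Dihedral Artin group DA_n = < a, b | [aba...]_n = [bab...]_n >,
   generators a = true, b = false. *)
Definition dihedral_artin_rel (n : nat) (u v : word bool) : Prop :=
  u = alt true false n /\ v = alt false true n.

Definition is_dihedral_artin (n : nat) (G : Group) (a b : G) : Prop :=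
  presents G bool (fun x => if x then a else b) (dihedral_artin_rel n).

Definition systolic_presentation (G : Group) (S : list G) : Prop :=
  let inS := fun x : G => In x S in
  (forall s t, inS s -> inS t -> s <> ginv t) /\
  presents G {s : G | In s S} (@proj1_sig G (fun s => In s S))
    (fun u v => exists a b c : {s : G | In s S},
        gmul (proj1_sig a) (gmul (proj1_sig b) (ginv (proj1_sig c))) = gone /\
        u = [(a, false); (b, false); (c, true)] /\ v = []) /\
  (forall a b c, inS a -> inS b -> inS c -> gmul (gmul a b) c <> gone) /\
  (forall a b c, inS a -> inS b -> inS c -> inS (gmul (gmul a b) c) ->
     inS (gmul a b) /\ inS (gmul b c)) /\
  (forall u w a b c d, inS u -> inS w -> inS a -> inS b -> inS c -> inS d ->
     gmul u a = gmul w b -> inS (gmul u a) ->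
     gmul u d = gmul w c -> inS (gmul u d) ->
     u <> w -> a <> d ->
     exists k, inS k /\ (w = gmul u k \/ gmul u a = gmul (gmul u d) k)) /\
  (forall a b c d v x, inS a -> inS b -> inS c -> inS d -> inS v -> inS x ->
     gmul b v = gmul c x -> inS (gmul b v) ->
     gmul a v = gmul d x -> inS (gmul a v) ->
     v <> x -> a <> b ->
     exists k, inS k /\ (v = gmul k x \/ gmul a v = gmul (gmul k b) v)) /\
  (forall u v x b c, inS u -> inS v -> inS x -> inS b -> inS c ->
     inS (gmul u x) -> inS (gmul u v) ->
     gmul v b = gmul x c -> inS (gmul v b) ->
     v <> x ->
     exists k, inS k /\ (k = gmul (gmul u v) b \/ v = gmul x k)) /\
  (forall v w x d a, inS v -> inS w -> inS x -> inS d -> inS a ->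
     inS (gmul v w) -> inS (gmul x w) ->
     gmul d x = gmul a v -> inS (gmul d x) ->
     v <> x ->
     exists k, inS k /\ (k = gmul (gmul a v) w \/ x = gmul k v)) /\
  (forall w v x u, inS w -> inS v -> inS x -> inS u ->
     inS (gmul w v) -> inS (gmul w x) -> inS (gmul u v) -> inS (gmul u x) ->
     v <> x -> u <> w ->
     exists k, inS k /\ (w = gmul k u \/ x = gmul v k)).

Definition cayley_systolic (G : Group) : Prop :=
  exists S : list G, systolic_presentation G S.

(* Main.v *)
Require Import Defs.
From Stdlib Require Import List Arith Lia ZArith ProofIrrelevance.
Import ListNotations.

Lemma mulVr (K : Group) (x : K) : gmul x (ginv x) = gone.
Proof.
  rewrite <- (gmul1l K (gmul x (ginv x))).
  rewrite <- (gmulVl K (ginv x)) at 1.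
  rewrite <- (gmulA K (ginv (ginv x)) (ginv x) (gmul x (ginv x))).
  rewrite (gmulA K (ginv x) x (ginv x)).
  rewrite gmulVl, gmul1l. apply gmulVl.
Qed.

Lemma mulr1 (K : Group) (x : K) : gmul x gone = x.
Proof.
  rewrite <- (gmulVl K x). rewrite gmulA. rewrite mulVr. apply gmul1l.
Qed.

Lemma mulKl (K : Group) (x y : K) : gmul (ginv x) (gmul x y) = y.
Proof. rewrite gmulA, gmulVl. apply gmul1l. Qed.

Lemma mulKr (K : Group) (x y : K) : gmul x (gmul (ginv x) y) = y.
Proof. rewrite gmulA, mulVr. apply gmul1l. Qed.

Lemma cancel_l (K : Group) (x y z : K) : gmul x y = gmul x z -> y = z.
Proof. intro H. rewrite <- (mulKl K x y), <- (mulKl K x z), H. reflexivity. Qed.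

Lemma cancel_r (K : Group) (x y z : K) : gmul y x = gmul z x -> y = z.
Proof.
  intro H. rewrite <- (mulr1 K y), <- (mulr1 K z), <- (mulVr K x), !gmulA, H.
  reflexivity.
Qed.

Lemma inv_uniq (K : Group) (x y : K) : gmul x y = gone -> y = ginv x.
Proof. intro H. apply (cancel_l K x). rewrite H. symmetry. apply mulVr. Qed.

Lemma invM (K : Group) (x y : K) : ginv (gmul x y) = gmul (ginv y) (ginv x).
Proof.
  symmetry. apply inv_uniq. rewrite <- gmulA, (gmulA K y), mulVr, gmul1l.
  apply mulVr.
Qed.

Lemma solve_l (K : Group) (x y z : K) : gmul x y = z <-> y = gmul (ginv x) z.
Proof. split; intro H; subst. - symmetry; apply mulKl. - apply mulKr. Qed.

Lemma solve_r (K : Group) (x y z : K) : gmul x y = z <-> x = gmul z (ginv y).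
Proof.
  split; intro H; subst.
  - rewrite <- gmulA, mulVr, mulr1. reflexivity.
  - rewrite <- gmulA, gmulVl, mulr1. reflexivity.
Qed.

Lemma hom1 (G H : Group) (phi : G -> H) : is_hom G H phi -> phi gone = gone.
Proof.
  intro h. apply (cancel_l H (phi gone)). rewrite <- h, gmul1l, mulr1. reflexivity.
Qed.

Lemma homV (G H : Group) (phi : G -> H) (x : G) : is_hom G H phi -> phi (ginv x) = ginv (phi x).
Proof.
  intro h. apply inv_uniq. rewrite <- h, mulVr. apply (hom1 G H phi h).
Qed.

Fixpoint gpow {K : Group} (x : K) (k : nat) : K :=
  match k with 0 => gone | S k => gmul x (gpow x k) end.

Fixpoint altp {K : Group} (x y : K) (k : nat) : K :=
  match k with 0 => gone | S k => gmul x (altp y x k) end.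

Fixpoint xs {K : Group} (A B : K) (k : nat) : K :=
  match k with
  | 0 => A
  | S 0 => B
  | S (S k) => gmul (gmul (ginv (gmul A B)) (xs A B k)) (gmul A B)
  end.

Lemma eval_alt (K : Group) (X : Type) (f : X -> K) (x y : X) k :
  eval_word f (alt x y k) = altp (f x) (f y) k.
Proof.
  revert x y; induction k; intros; simpl; [reflexivity|]. rewrite IHk. reflexivity.
Qed.

Lemma gpowS (K : Group) (x : K) k : gpow x (S k) = gmul (gpow x k) x.
Proof.
  induction k; simpl. - rewrite gmul1l, mulr1. reflexivity.
  - simpl in IHk. rewrite IHk at 1. rewrite gmulA. reflexivity.
Qed.

Lemma altp_even (K : Group) (x y : K) m : altp x y (2*m) = gpow (gmul x y) m.
Proof.
  induction m; [reflexivity|].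
  replace (2 * S m) with (S (S (2*m))) by lia.
  change (altp x y (S (S (2*m)))) with (gmul x (gmul y (altp x y (2*m)))).
  simpl gpow. rewrite IHm, gmulA. reflexivity.
Qed.

Lemma altp_odd (K : Group) (x y : K) m : altp x y (S (2*m)) = gmul (gpow (gmul x y) m) x.
Proof.
  induction m; [simpl; rewrite gmul1l, mulr1; reflexivity|].
  replace (S (2 * S m)) with (S (S (S (2*m)))) by lia.
  change (altp x y (S (S (S (2*m))))) with (gmul x (gmul y (altp x y (S (2*m))))).
  rewrite IHm. simpl gpow. rewrite !gmulA. reflexivity.
Qed.

Lemma pow_swap (K : Group) (x y : K) m : gmul (gpow (gmul y x) m) y = gmul y (gpow (gmul x y) m).
Proof.
  induction m; simpl; [rewrite gmul1l, mulr1; reflexivity|].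
  rewrite <- gmulA, IHm, !gmulA. reflexivity.
Qed.

Lemma xs_even (K : Group) (A B : K) j :
  xs A B (2*j) = gmul (gmul (ginv (gpow (gmul A B) j)) A) (gpow (gmul A B) j).
Proof.
  induction j.
  { simpl. rewrite mulr1, <- (inv_uniq K gone gone (gmul1l K gone)), gmul1l. reflexivity. }
  replace (2 * S j) with (S (S (2*j))) by lia.
  change (xs A B (S (S (2*j)))) with (gmul (gmul (ginv (gmul A B)) (xs A B (2*j))) (gmul A B)).
  rewrite IHj.
  rewrite (gpowS K (gmul A B) j). rewrite !invM.
  rewrite !gmulA. reflexivity.
Qed.

Lemma xs_odd (K : Group) (A B : K) j :
  xs A B (S (2*j)) = gmul (gmul (ginv (gpow (gmul A B) j)) B) (gpow (gmul A B) j).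
Proof.
  induction j.
  { simpl. rewrite mulr1, <- (inv_uniq K gone gone (gmul1l K gone)), gmul1l. reflexivity. }
  replace (S (2 * S j)) with (S (S (S (2*j)))) by lia.
  change (xs A B (S (S (S (2*j))))) with (gmul (gmul (ginv (gmul A B)) (xs A B (S (2*j)))) (gmul A B)).
  rewrite IHj.
  rewrite (gpowS K (gmul A B) j). rewrite !invM.
  rewrite !gmulA. reflexivity.
Qed.

Lemma conjM (K : Group) (P X Y : K) :
  gmul (gmul (gmul (ginv P) X) P) (gmul (gmul (ginv P) Y) P) = gmul (gmul (ginv P) (gmul X Y)) P.
Proof.
  rewrite <- !gmulA. f_equal. f_equal. rewrite (gmulA K P), mulVr, gmul1l. reflexivity.
Qed.

Lemma xs_tri (K : Group) (A B : K) k :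
  gmul (xs A B k) (xs A B (S k)) = gmul A B.
Proof.
  assert (H : gmul (xs A B k) (xs A B (S k)) = gmul A B /\
              gmul (xs A B (S k)) (xs A B (S (S k))) = gmul A B).
  2: apply H.
  induction k.
  - split; [reflexivity|]. simpl xs.
    rewrite invM, !gmulA, mulVr, gmul1l, gmulVl, gmul1l.
    reflexivity.
  - destruct IHk as [H1 H2]. split; [exact H2|].
    change (xs A B (S (S (S k)))) with (gmul (gmul (ginv (gmul A B)) (xs A B (S k))) (gmul A B)).
    change (xs A B (S (S k))) with (gmul (gmul (ginv (gmul A B)) (xs A B k)) (gmul A B)).
    rewrite conjM, H1, gmulVl, gmul1l. reflexivity.
Qed.

Lemma conj_eq (K : Group) (P X Y Z : K) :
  gmul (gmul (gmul (ginv P) X) P) Y = Z <-> gmul X (gmul P Y) = gmul P Z.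
Proof.
  rewrite <- !gmulA. split; intro H.
  - rewrite <- H, mulKr. reflexivity.
  - rewrite H, mulKl. reflexivity.
Qed.

Lemma closure_iff (K : Group) (A B : K) n : 1 <= n ->
  (gmul (xs A B (n - 1)) A = gmul A B <-> altp A B n = altp B A n).
Proof.
  intro Hn. destruct (Nat.Even_or_Odd n) as [[m Hm]|[m Hm]]; subst n.
  - destruct m as [|m]; [lia|].
    replace (2 * S m - 1) with (S (2*m)) by lia.
    rewrite xs_odd, conj_eq.
    replace (2 * S m) with (S (S (2*m))) by lia.
    change (altp B A (S (S (2*m)))) with (gmul B (gmul A (altp B A (2*m)))).
    change (altp A B (S (S (2*m)))) with (gmul A (gmul B (altp A B (2*m)))).
    rewrite !altp_even, <- (pow_swap K B A m).
    replace (gmul A (gmul B (gpow (gmul A B) m))) with (gmul (gpow (gmul A B) m) (gmul A B))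
      by (rewrite <- gpowS, gmulA; reflexivity).
    split; intro H; symmetry; exact H.
  - replace (2 * m + 1 - 1) with (2*m) by lia.
    replace (2 * m + 1) with (S (2*m)) by lia.
    rewrite xs_even, conj_eq, altp_odd, altp_odd, (pow_swap K A B m), <- gpowS.
    simpl gpow. rewrite <- gmulA.
    split; intro H.
    + apply (cancel_l K A). exact H.
    + rewrite H. reflexivity.
Qed.

Definition Zgrp : Group :=
  {| gcar := Z; gmul := Z.add; ginv := Z.opp; gone := 0%Z;
     gmulA := Z.add_assoc; gmul1l := Z.add_0_l; gmulVl := Z.add_opp_diag_l |}.

Lemma xs_Z k : @xs Zgrp 1%Z 1%Z k = 1%Z.
Proof.
  assert (H : @xs Zgrp 1%Z 1%Z k = 1%Z /\ @xs Zgrp 1%Z 1%Z (S k) = 1%Z); [|apply H].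
  induction k; [split; reflexivity|]. destruct IHk as [H1 H2]. split; [exact H2|].
  change (@xs Zgrp 1%Z 1%Z (S (S k))) with
    (Z.add (Z.add (Z.opp (Z.add 1 1)) (@xs Zgrp 1%Z 1%Z k)) (Z.add 1 1))%Z.
  rewrite H1. reflexivity.
Qed.

Lemma hom_xs (G H : Group) (phi : G -> H) (A B : G) k : is_hom G H phi ->
  phi (xs A B k) = xs (phi A) (phi B) k.
Proof.
  intro h.
  assert (P : phi (xs A B k) = xs (phi A) (phi B) k /\
              phi (xs A B (S k)) = xs (phi A) (phi B) (S k)); [|apply P].
  induction k; [split; reflexivity|]. destruct IHk as [H1 H2]. split; [exact H2|].
  change (xs A B (S (S k))) with (gmul (gmul (ginv (gmul A B)) (xs A B k)) (gmul A B)).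
  change (xs (phi A) (phi B) (S (S k))) with
    (gmul (gmul (ginv (gmul (phi A) (phi B))) (xs (phi A) (phi B) k)) (gmul (phi A) (phi B))).
  rewrite !h, homV, h, H1 by exact h. reflexivity.
Qed.

Theorem mainTheorem12 :
  forall n : nat, 2 <= n ->
  forall (G : Group) (a b : G), is_dihedral_artin n G a b -> cayley_systolic G.
Proof.
  intros n Hn G a b HG.
  destruct HG as [Hgen [Hrel Huniv]].
  set (D := gmul a b).
  assert (HA : altp a b n = altp b a n).
  { pose proof (Hrel (alt true false n) (alt false true n) (conj eq_refl eq_refl)) as E.
    rewrite !eval_alt in E. exact E. }
  assert (HC : gmul (xs a b (n - 1)) a = D).
  { apply (closure_iff G a b n); [lia|exact HA]. }
  destruct (Huniv Zgrp (fun _ => 1%Z)) as [deg [hdeg Hdeg]].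
  { intros u v [-> ->]. rewrite !eval_alt. reflexivity. }
  assert (degM : forall x y, deg (gmul x y) = (deg x + deg y)%Z) by (intros; apply hdeg).
  assert (dega : deg a = 1%Z) by exact (Hdeg true).
  assert (degb : deg b = 1%Z) by exact (Hdeg false).
  assert (degD : deg D = 2%Z) by (unfold D; rewrite degM, dega, degb; reflexivity).
  assert (degx : forall k, deg (xs a b k) = 1%Z).
  { intro k. rewrite (hom_xs G Zgrp deg a b k hdeg). change (gcar Zgrp) with Z in *.
    rewrite dega, degb. apply xs_Z. }
  set (Sl := map (xs a b) (seq 0 n) ++ [D]).
  assert (inS : forall s, In s Sl <-> (exists i, i < n /\ s = xs a b i) \/ s = D).
  { intro s. unfold Sl. rewrite in_app_iff, in_map_iff. simpl. split.
    - intros [[i [<- Hi]]|[<-|[]]]; [left; exists i; rewrite in_seq in Hi; split; [lia|reflexivity]|right; reflexivity].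
    - intros [[i [Hi ->]]| ->]; [left; exists i; rewrite in_seq; split; [reflexivity|lia]|right; left; reflexivity]. }
  assert (degS : forall s, In s Sl -> deg s = 1%Z \/ s = D).
  { intros s Hs. apply inS in Hs. destruct Hs as [[i [_ ->]]| ->]; [left; apply degx|right; reflexivity]. }
  assert (degS' : forall s, In s Sl -> (1 <= deg s <= 2)%Z).
  { intros s Hs. destruct (degS s Hs) as [E| ->]; lia. }
  assert (prodS : forall s t, In s Sl -> In t Sl -> In (gmul s t) Sl -> gmul s t = D).
  { intros s t Hs Ht Hst. destruct (degS _ Hst) as [E|E]; [|exact E].
    rewrite degM in E. pose proof (degS' s Hs); pose proof (degS' t Ht). lia. }
  exists Sl. unfold systolic_presentation.
  split; [|split; [|split; [|split; [|split; [|split; [|split; [|split]]]]]]].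
  - intros s t Hs Ht E. assert (E' : deg s = (- deg t)%Z).
    { rewrite E. apply (homV G Zgrp deg t hdeg). }
    pose proof (degS' s Hs); pose proof (degS' t Ht). lia.
  - assert (p0 : In (xs a b 0) Sl) by (apply inS; left; exists 0; split; [lia|reflexivity]).
    assert (p1 : In (xs a b 1) Sl) by (apply inS; left; exists 1; split; [lia|reflexivity]).
    assert (pD : In D Sl) by (apply inS; right; reflexivity).
    set (sA := exist (fun s => In s Sl) (xs a b 0) p0).
    set (sB := exist (fun s => In s Sl) (xs a b 1) p1).
    set (sD := exist (fun s => In s Sl) D pD).
    split; [|split].
    + intro g. destruct (Hgen g) as [w Hw].
      exists (map (fun q : bool * bool => (if fst q then sA else sB, snd q)) w).
      rewrite <- Hw. clear Hw. induction w as [|[x i] w IH]; [reflexivity|].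
      simpl. rewrite IH. destruct x; reflexivity.
    + intros u v [s [t [c [Hst [-> ->]]]]]. simpl. rewrite mulr1. exact Hst.
    + intros H f hf.
      assert (tri : forall s t u : {s : G | In s Sl},
        gmul (proj1_sig s) (gmul (proj1_sig t) (ginv (proj1_sig u))) = gone ->
        gmul (f s) (f t) = f u).
      { intros s t u E.
        pose proof (hf [(s, false); (t, false); (u, true)] []
                      (ex_intro _ s (ex_intro _ t (ex_intro _ u (conj E (conj eq_refl eq_refl)))))) as E'.
        simpl in E'. rewrite mulr1, gmulA in E'.
        apply (cancel_r H (ginv (f u))). rewrite E', mulVr. reflexivity. }
      assert (Gtri : forall x y, gmul x y = D -> gmul x (gmul y (ginv D)) = gone).
      { intros x y E. rewrite gmulA, E. apply mulVr. }
      assert (pirr : forall s p q, f (exist _ s p) = f (exist _ s q)).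
      { intros s p q. rewrite (proof_irrelevance _ p q). reflexivity. }
      set (FA := f sA). set (FB := f sB).
      assert (fD : f sD = gmul FA FB).
      { symmetry. apply tri. apply Gtri. reflexivity. }
      assert (fxs : forall i (Hi : i < n) p, f (exist _ (xs a b i) p) = xs FA FB i).
      { induction i as [|i IH]; intros Hi p.
        - apply pirr.
        - assert (pi : In (xs a b i) Sl) by (apply inS; left; exists i; split; [lia|reflexivity]).
          pose proof (tri (exist _ (xs a b i) pi) (exist _ (xs a b (S i)) p) sD
                        (Gtri _ _ (xs_tri G a b i))) as T.
          rewrite IH in T by lia. rewrite fD in T.
          apply (cancel_l H (xs FA FB i)). rewrite T. symmetry. apply xs_tri. }
      assert (HH : altp FA FB n = altp FB FA n).
      { apply (closure_iff H FA FB n); [lia|].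
        assert (pn : In (xs a b (n - 1)) Sl) by (apply inS; left; exists (n - 1); split; [lia|reflexivity]).
        pose proof (tri (exist _ (xs a b (n - 1)) pn) sA sD (Gtri _ _ HC)) as T.
        rewrite fxs in T by lia. rewrite fD in T. exact T. }
      destruct (Huniv H (fun x => if x then FA else FB)) as [phi [hphi Hphi]].
      { intros u v [-> ->]. rewrite !eval_alt. exact HH. }
      exists phi. split; [exact hphi|].
      intros [s p]. simpl.
      destruct (proj1 (inS s) p) as [[i [Hi ->]]| ->].
      * rewrite (hom_xs G H phi a b i hphi), (Hphi true), (Hphi false).
        symmetry. apply fxs. exact Hi.
      * unfold D. rewrite hphi, (Hphi true), (Hphi false). rewrite <- fD. apply pirr.
  - intros x y z Hx Hy Hz E. assert (E' : deg (gmul (gmul x y) z) = 0%Z).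
    { rewrite E. apply (hom1 G Zgrp deg hdeg). }
    rewrite !degM in E'. pose proof (degS' x Hx); pose proof (degS' y Hy); pose proof (degS' z Hz). lia.
  - intros x y z Hx Hy Hz Hxyz. exfalso. pose proof (degS' _ Hxyz).
    rewrite !degM in H. pose proof (degS' x Hx); pose proof (degS' y Hy); pose proof (degS' z Hz). lia.
  - intros u w a' b' c d Hu Hw Ha Hb Hc Hd E1 S1 E2 S2 Huw Had. exfalso. apply Had.
    apply (cancel_l G u). rewrite (prodS u a' Hu Ha S1), (prodS u d Hu Hd S2). reflexivity.
  - intros a' b' c d v x Ha Hb Hc Hd Hv Hx E1 S1 E2 S2 Hvx Hab. exfalso. apply Hab.
    apply (cancel_r G v). rewrite (prodS a' v Ha Hv S2), (prodS b' v Hb Hv S1). reflexivity.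
  - intros u v x b' c Hu Hv Hx Hb Hc Sux Suv E S1 Hvx. exfalso. apply Hvx.
    apply (cancel_l G u). rewrite (prodS u v Hu Hv Suv), (prodS u x Hu Hx Sux). reflexivity.
  - intros v w x d a' Hv Hw Hx Hd Ha Svw Sxw E S1 Hvx. exfalso. apply Hvx.
    apply (cancel_r G w). rewrite (prodS v w Hv Hw Svw), (prodS x w Hx Hw Sxw). reflexivity.
  - intros w v x u Hw Hv Hx Hu Swv Swx Suv Sux Hvx Huw. exfalso. apply Hvx.
    apply (cancel_l G w). rewrite (prodS w v Hw Hv Swv), (prodS w x Hw Hx Swx). reflexivity.
Qed.
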